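(* Let $\mathcal{S}=\{(k_1,\ldots,k_r): r\geq 1,\ k_1\geq 2,\ k_2,\ldots,k_r\geq 1 \text{ integers}\}$. Define a relation $\succ$ on $\mathcal{S}$ as follows: $(k_1,\ldots,k_r)\succ(m_1,\ldots,m_s)$ if either $(m_1,\ldots,m_s)$ is a proper initial segment of $(k_1,\ldots,k_r)$ (i.e. $s<r$ and $k_i=m_i$ for $1\leq i\leq s$), or there is $j\geq 0$ with $j<\min(r,s)$ such that $k_i=m_i$ for $1\leq i\leq j$ and $k_{j+1}<m_{j+1}$. Then for all $(k_1,\ldots,k_r),(m_1,\ldots,m_s)\in\mathcal{S}$, \[ (k_1,\ldots,k_r)\succ(m_1,\ldots,m_s)\iff \zeta^{\star}(k_1,\ldots,k_r)>\zeta^{\star}(m_1,\ldots,m_s). \]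
   Context: For integers $k_1\geq 2$ and $k_2,\ldots,k_r\geq 1$, $\zeta^{\star}(k_1,\ldots,k_r)=\sum_{n_1\geq n_2\geq\cdots\geq n_r\geq 1}\frac{1}{n_1^{k_1}\cdots n_r^{k_r}}$. (The paper defines $\succ$ as generated by the two rules ''$(k_1,\ldots,k_r,k_{r+1})\succ(k_1,\ldots,k_r)$'' and the lexicographic rule with reversed inequality; the description above is the resulting order.) *)

(* Defs.v *)
From HB Require Import structures.
From mathcomp Require Import all_boot all_order all_algebra.
From mathcomp Require Import all_classical all_reals all_analysis.
Set Implicit Arguments. Unset Strict Implicit. Unset Printing Implicit Defensive.
Import Order.TTheory GRing.Theory Num.Theory.
Import numFieldNormedType.Exports.
Local Open Scope ring_scope.

Definition admissible (k : seq nat) : bool :=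
  [&& k != [::], (2 <= head 0%N k)%N & all (fun x => 0 < x)%N k].

(* truncated zeta-star: zeta_trunc (k1,...,kr) N =
   sum_{N >= n1 >= n2 >= ... >= nr >= 1} 1/(n1^k1 ... nr^kr) *)
Fixpoint zeta_trunc (R : realType) (k : seq nat) (N : nat) : R :=
  match k with
  | [::] => 1
  | k1 :: ks => \sum_(1 <= n < N.+1) ((n%:R ^+ k1)^-1 * zeta_trunc R ks n)
  end.

Definition zeta_star (R : realType) (k : seq nat) : R :=
  limn (fun N => zeta_trunc R k N).

Definition succ_rel (k m : seq nat) : Prop :=
  ((size m < size k)%N /\ take (size m) k = m) \/
  (exists j : nat, (j < minn (size k) (size m))%N /\
     take j k = take j m /\ (nth 0%N k j < nth 0%N m j)%N).

(* Main.v *)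
Require Import Defs.
From HB Require Import structures.
From mathcomp Require Import all_boot all_order all_algebra.
From mathcomp Require Import all_classical all_reals all_analysis.
From mathcomp Require Import ring lra.
Import Order.TTheory GRing.Theory Num.Theory.
Import numFieldNormedType.Exports.
Local Open Scope ring_scope.

Lemma br (R : realType) (x : R) : 1 <= x -> (x^+2)^-1 + 2 * (x+1)^-1 - 2 * x^-1 <= 0.
Proof.
move=> hx.
have hx0 : x != 0 by rewrite gt_eqF // (lt_le_trans ltr01 hx).
have hx1 : x + 1 != 0.  rewrite gt_eqF //. lra.
have -> : (x^+2)^-1 + 2 * (x+1)^-1 - 2 * x^-1 = (1 - x) / (x^+2 * (x+1)). field. by rewrite hx0 hx1.
apply: mulr_le0_ge0. lra.
rewrite invr_ge0 mulr_ge0 // ?exprn_ge0 //; lra.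
Qed.

Lemma invX_le (R : realType) (x : R) a b : 1 <= x -> (a <= b)%N -> (x^+b)^-1 <= (x^+a)^-1.
Proof.
move=> hx hab.
have x0 : 0 < x by lra.
rewrite lef_pV2 ?posrE ?exprn_gt0 //.
exact: ler_weXn2l.
Qed.

Lemma invXS (R : realType) (x : R) b : 0 < x -> (x^+b.+1)^-1 * x = (x^+b)^-1.
Proof.
move=> x0; have xn : x != 0 by rewrite gt_eqF.
by rewrite exprSr invfM -mulrA mulVf // mulr1.
Qed.

Lemma natr_ge1 (R : realType) n : (0 < n)%N -> 1 <= (n%:R : R).
Proof. by move=> h; rewrite ler1n. Qed.

Section Z.
Variable R : realType.
Notation z := (zeta_trunc R).

Lemma zS a t N : z (a::t) N.+1 = z (a::t) N + ((N.+1)%:R ^+ a)^-1 * z t N.+1.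
Proof. by rewrite /= big_nat_recr //=. Qed.

Lemma z0 a t : z (a::t) 0 = 0.
Proof. by rewrite /= big_geq. Qed.

Lemma z1 t : z t 1 = 1.
Proof. elim: t => //= a t IH; by rewrite big_nat1 expr1n invr1 mul1r IH. Qed.

Lemma zge0 t N : 0 <= z t N.
Proof.
elim: t N => //= a t IH N; apply: sumr_ge0 => n _; apply: mulr_ge0.
  by rewrite invr_ge0 exprn_ge0.
exact: IH.
Qed.

Lemma zmono a t N : z (a::t) N <= z (a::t) N.+1.
Proof. by rewrite zS lerDl mulr_ge0 ?zge0 // invr_ge0 exprn_ge0. Qed.

Lemma zge1 t N : (0 < N)%N -> 1 <= z t N.
Proof.
case: t => [|a t] //; elim: N => // N IH _.
case: N IH => [|N] IH; first by rewrite z1.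
exact: le_trans (IH isT) (zmono _ _ _).
Qed.

Lemma zle t : all (fun x => 0 < x)%N t ->
  forall N, (0 < N)%N -> z t N <= N%:R /\ ((1 < N)%N -> z t N < N%:R).
Proof.
elim: t => [|c t IH] /=.
  by move=> _ N hN; split; [rewrite ler1n | move=> h; rewrite ltr1n].
case/andP=> c0 /IH {}IH.
have weak : forall N, z (c::t) N <= N%:R.
  elim=> [|N IHN]; first by rewrite z0.
  rewrite zS [X in _ <= X](_ : _ = N%:R + 1); last by rewrite natr1.
  apply: lerD => //.
  have x1 : 1 <= (N.+1%:R : R) by rewrite ler1n.
  apply: le_trans (_ : (N.+1%:R ^+ c)^-1 * N.+1%:R <= 1).
    apply: ler_wpM2l; first by rewrite invr_ge0 exprn_ge0 //; lra.
    by case: (IH N.+1 isT).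
  case: c c0 {IH IHN} => // c _; rewrite invXS; last lra.
  by rewrite invf_le1 ?exprn_ege1 // exprn_gt0 //; lra.
move=> N hN; split; first exact: weak.
case: N hN => [|[|N]] // _ _.
change (z (c::t) N.+2 < N.+2%:R). rewrite zS [X in _ < X](_ : _ = N.+1%:R + 1); last by rewrite natr1.
apply: ler_ltD => //.
have x1 : 1 <= (N.+2%:R : R) by rewrite ler1n.
apply: lt_le_trans (_ : (N.+2%:R ^+ c)^-1 * N.+2%:R <= 1).
  rewrite ltr_pM2l; last by rewrite invr_gt0 exprn_gt0 //; lra.
  by case: (IH N.+2 isT) => _ ->.
case: c c0 {IH weak} => // c _; rewrite invXS; last lra.
by rewrite invf_le1 ?exprn_ege1 // exprn_gt0 //; lra.
Qed.


Lemma za2 a t N : (2 <= a)%N -> z (a::t) N <= z (2::t) N.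
Proof.
move=> a2 /=; apply: ler_sum_nat => n /andP[n1 _].
apply: ler_wpM2r; first exact: zge0.
by apply: invX_le => //; rewrite ler1n.
Qed.

Lemma z2nil N : z [:: 2%N] N + 2 / N.+1%:R <= 2.
Proof.
elim: N => [|N IH]; first by rewrite z0 add0r divr1.
rewrite zS /= mulr1.
have x1 : 1 <= (N.+1%:R : R) by rewrite ler1n.
have := @br R _ x1.
have -> : (N.+2%:R : R) = N.+1%:R + 1 by rewrite natr1.
move: IH; rewrite /= => IH h.
move: (\sum_(1 <= n < N.+1) _) IH h => s IH h.
move: (N.+1%:R ^- 2) IH h => u IH h.
move: (2 / (N.+1%:R + 1)) IH h => v IH h.
move: (2 / N.+1%:R) IH h => w IH h.
lra.
Qed.

Lemma z22 c t N : (0 < c)%N ->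
  z [:: 2%N, c & t] N + 2 * z (c::t) N / N.+1%:R <= 2 * z (2::t) N.
Proof.
move=> c0; elim: N => [|N IH]; first by rewrite !z0 !mulr0 mul0r addr0.
rewrite !zS.
have x1 : 1 <= (N.+1%:R : R) by rewrite ler1n.
have -> : (N.+2%:R : R) = N.+1%:R + 1 by rewrite natr1.
set x := (N.+1%:R : R) in IH x1 *.
set A := z [:: 2%N, c & t] N in IH *.
set S := z (c::t) N in IH *.
set B := z (2::t) N in IH *.
set e := z t N.+1.
set f := (x ^+ c)^-1 * e.
have e0 : 0 <= e by apply: zge0.
have S0 : 0 <= S by apply: zge0.
have f0 : 0 <= f by rewrite mulr_ge0 // invr_ge0 exprn_ge0 //; lra.
have hf : f <= x^-1 * e.
  apply: ler_wpM2r => //; rewrite -[X in _ <= X^-1]expr1; exact: invX_le.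
have h1 : (S + f) * ((x^+2)^-1 + 2 * (x+1)^-1 - 2 * x^-1) <= 0.
  by apply: mulr_ge0_le0; [exact: addr_ge0 | exact: br].
have h2 : f * x^-1 <= e * (x^+2)^-1.
  rewrite -exprVn expr2 mulrA; apply: ler_wpM2r; first by rewrite invr_ge0; lra.
  by rewrite mulrC.
move: IH h1 h2 hf; rewrite -/f.
set p := (x^+2)^-1. set q := (x+1)^-1. set r := x^-1.
move=> IH h1 h2 hf.
nra.
Qed.

Lemma zbound2 t N : all (fun x => 0 < x)%N t -> z (2::t) N <= 2 ^+ (size t).+1.
Proof.
elim: t N => [|c t IH] N.
  move=> _; rewrite expr1; apply: le_trans (z2nil N); rewrite lerDl mulr_ge0 // invr_ge0 //.
rewrite [all _ _]/= => /andP[c0 /IH {}IH].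
apply: le_trans (_ : 2 * z (2::t) N <= _); last first.
  by rewrite exprS ler_wpM2l.
apply: le_trans _ (z22 c t N c0); rewrite lerDl !mulr_ge0 ?zge0 // invr_ge0 //.
Qed.

Lemma zbound k N : admissible k -> z k N <= 2 ^+ size k.
Proof.
case: k => [|a t] //; rewrite /admissible => /and3P[_ a2 /andP[_ ht]].
exact: (le_trans (za2 _ _ N a2) (zbound2 t N ht)).
Qed.

Lemma zcvg k : admissible k -> cvgn (z k).
Proof.
move=> ak; apply: nondecreasing_is_cvgn.
  apply/nondecreasing_seqP => n.
  case: k ak => [|a t] _; first by [].
  exact: zmono.
exists (2 ^+ size k) => _ [n _ <-]; exact: zbound.
Qed.


Definition Q x y := [/\ (forall i, (0 < i)%N -> z y i <= z x i),
  (forall i, z x i - z y i <= z x i.+1 - z y i.+1) & z y 2 < z x 2].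

Lemma mono_pos x y : z x 0 = z y 0 ->
  (forall i, z x i - z y i <= z x i.+1 - z y i.+1) -> forall i, z y i <= z x i.
Proof.
move=> h0 hm; elim=> [|i IH]; first by rewrite h0.
have := hm i; rewrite -subr_ge0 in IH; rewrite -subr_ge0; lra.
Qed.

Lemma z2 p x : z (p::x) 2 = 1 + (2%:R ^+ p)^-1 * z x 2.
Proof. by rewrite zS z1. Qed.

Lemma Qcons p x y : Q x y -> Q (p::x) (p::y).
Proof.
case=> h1 h2 h3.
have m : forall i, z (p::x) i - z (p::y) i <= z (p::x) i.+1 - z (p::y) i.+1.
  move=> i; rewrite !zS.
  have := h1 i.+1 isT.
  have : 0 <= ((i.+1)%:R ^+ p)^-1 :> R by rewrite invr_ge0 exprn_ge0.
  move: ((i.+1)%:R ^+ p)^-1 => u u0 h.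
  have : u * z y i.+1 <= u * z x i.+1 by apply: ler_wpM2l.
  lra.
split => //.
  by move=> i _; apply: mono_pos => //; rewrite !z0.
rewrite !z2 ltrD2l ltr_pM2l // invr_gt0 exprn_gt0 //.
Qed.

Lemma Qcat pre x y : Q x y -> Q (pre ++ x) (pre ++ y).
Proof. by elim: pre => //= p pre IH /IH; apply: Qcons. Qed.

Lemma Qnil c t : Q (c::t) [::].
Proof.
split.
- by move=> i i0; apply: zge1.
- move=> i; have := zmono c t i; rewrite (_ : z [::] i = 1) // (_ : z [::] i.+1 = 1) //; lra.
rewrite z2 /= ltrDl mulr_gt0 // ?invr_gt0 ?exprn_gt0 //.
have h := zge1 t 2 isT. lra.
Qed.

Lemma Qlex a b tk tm : (a < b)%N -> all (fun x => 0 < x)%N tm ->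
  Q (a::tk) (b::tm).
Proof.
case: b => // b ab htm.
have key : forall i, (0 < i)%N ->
  (i%:R ^+ b.+1)^-1 * z tm i <= (i%:R ^+ b)^-1 /\
  ((1 < i)%N -> (i%:R ^+ b.+1)^-1 * z tm i < (i%:R ^+ b)^-1).
  move=> i i0; have [hw hs] := zle tm htm i i0.
  have x0 : 0 < (i%:R : R) by rewrite ltr0n.
  have p0 : 0 < ((i%:R : R) ^+ b.+1)^-1 by rewrite invr_gt0 exprn_gt0.
  rewrite -(@invXS R _ b x0); split.
    by apply: ler_wpM2l => //; apply: ltW.
  by move=> i1; rewrite ltr_pM2l // hs.
have key2 : forall i, (0 < i)%N -> (i%:R ^+ b)^-1 <= (i%:R ^+ a)^-1 * z tk i :> R.
  move=> i i0; apply: le_trans (_ : (i%:R ^+ a)^-1 <= _).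
    by apply: invX_le => //; rewrite ler1n.
  rewrite -{1}[(i%:R ^+ a)^-1]mulr1; apply: ler_wpM2l; last exact: zge1.
  by rewrite invr_ge0 exprn_ge0.
have m : forall i, z (a::tk) i - z (b.+1::tm) i <= z (a::tk) i.+1 - z (b.+1::tm) i.+1.
  move=> i; rewrite !zS.
  have [k1 _] := key i.+1 isT; have := key2 i.+1 isT.
  lra.
split => //.
  by move=> i _; apply: mono_pos => //; rewrite !z0.
rewrite !z2 ltrD2l.
have [_ k1] := key 2 isT; have := key2 2 isT; have := k1 isT.
lra.
Qed.

End Z.

Lemma gap (R : realType) k m : admissible k -> admissible m -> Q R k m ->
  zeta_star R m < zeta_star R k.
Proof.
move=> hk hm [_ h2 h3].
have ck := zcvg R k hk; have cm := zcvg R m hm.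
set d := (zeta_trunc R k - zeta_trunc R m).
have cd : cvgn d by apply: is_cvgB.
have md : {homo d : n p / (n <= p)%N >-> n <= p}.
  by apply/nondecreasing_seqP => n; rewrite /d /=; apply: h2.
have := nondecreasing_cvgn_le md cd 2.
rewrite /d limB // => h.
rewrite -subr_gt0; apply: lt_le_trans h; rewrite /= subr_gt0 //.
Qed.

Lemma adm_pos k : admissible k -> all (fun x => 0 < x)%N k.
Proof. by case/and3P. Qed.

Lemma succ_Q (R : realType) k m : admissible k -> admissible m -> succ_rel k m -> Q R k m.
Proof.
move=> /adm_pos pk /adm_pos pm; case.
- case=> hs ht.
  have e : k = take (size m) k ++ drop (size m) k by rewrite cat_take_drop.
  rewrite ht (drop_nth 0 hs) in e.
  move: e; set c := nth 0 k (size m); set t := drop (size m).+1 k => ->.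
  rewrite -[in X in Q _ _ X](cats0 m); apply: Qcat; exact: Qnil.
- case=> j [hj [ht hn]].
  move: hj; rewrite leq_min => /andP[hk hm].
  have ek : k = take j k ++ drop j k by rewrite cat_take_drop.
  have em : m = take j m ++ drop j m by rewrite cat_take_drop.
  rewrite ht (drop_nth 0 hk) in ek; rewrite (drop_nth 0 hm) in em.
  have pt : all (fun x => 0 < x)%N (drop j.+1 m).
    by move: pm; rewrite -{1}(cat_take_drop j.+1 m) all_cat => /andP[_ ->].
  move: ek em hn pt.
  set a := nth 0 k j; set b := nth 0 m j.
  set tk := drop j.+1 k; set tm := drop j.+1 m; set p := take j m.
  move=> -> -> hn pt.
  apply: Qcat; exact: Qlex.
Qed.

Lemma succ_lift a k m : succ_rel k m -> succ_rel (a::k) (a::m).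
Proof.
case=> [[hs ht]|[j [hj [ht hn]]]]; [left|right].
  by split => /=; [rewrite ltnS | rewrite ht].
exists j.+1; split; first by rewrite /= minnSS ltnS.
by split => //=; rewrite ht.
Qed.

Lemma succ_total k m : k = m \/ succ_rel k m \/ succ_rel m k.
Proof.
elim: k m => [|a k IH] [|b m].
- by left.
- by right; right; left.
- by right; left; left.
- case: (ltngtP a b) => [ab|ba|<-].
  + by right; left; right; exists 0%N; rewrite /= minnSS.
  + by right; right; right; exists 0%N; rewrite /= minnSS.
  + case: (IH m) => [->|[h|h]]; [left | right; left | right; right] => //;
    exact: succ_lift.
Qed.

Theorem theorem1p2 (R : realType) (k m : seq nat) :
  admissible k -> admissible m ->
  (succ_rel k m <-> zeta_star R m < zeta_star R k).
Proof.
move=> hk hm; split.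
  by move=> h; apply: gap => //; apply: succ_Q.
move=> hlt; case: (succ_total k m) => [e|[//|h]].
  by move: hlt; rewrite e ltxx.
have := @gap R _ _ hm hk (@succ_Q R _ _ hm hk h).
by rewrite ltNge (ltW hlt).
Qed.
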